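(* Consider the multi-hop control network closed loop described in the context, with plant, graphs, scheduling (hence all path delays), the integers $n,r,m,s$ and the step amplitude $A$ fixed. There exists a polynomial $Q$ in the entries of $\mathbf d=(d_s,\dots,d_0)$ and $\mathbf w_R=(W_R(e))_{e\in E_R}$, with coefficients depending only on the fixed data, such that for every choice of $(\mathbf c,\mathbf d,\mathbf w_R,\mathbf w_O)$ for which the closed loop satisfies the deadbeat identity $$D_C(z)D_{P'}(z)+N_{C'}(z)N_{G_R}(z)N_P(z)N_{G_O}(z)=z^{l},\qquad l=m+r+1,$$ and the step response has zero steady-state error ($e(k)\to 0$), the quadratic $\ell_2$ norm of the error satisfies $$\|e\|_{\mathcal L_2}^2=\sum_{k\ge 0}e(k)^2=Q(\mathbf d,\mathbf w_R).$$
   Context: Plant: a discrete-time SISO transfer function $P(z)=\dfrac{N_P(z)}{M(z)D_{P'}(z)}$ with $N_P(z)=b_{n-1}z^{n-1}+\dots+b_0$, $D_{P'}(z)=z^r+a_{r-1}z^{r-1}+\dots+a_0$, $M(z)$ a monic polynomial, and $r+\deg M=n$. Controllability network: an acyclic directed graph $(V_R,E_R)$ with a controller node $v_c$ and an actuator node $v_u$, a weight function $W_R:E_R\to\mathbb R$, and a fixed periodic scheduling that assigns to every directed path $\rho$ from $v_c$ to $v_u$ a delay $d(\rho)\in\mathbb N$. Let $\chi_R(d)$ be the set of such paths of delay $d$, $D_R$ the finite set of delays that occur, $\bar D_R=\max D_R$, $W_R(\rho)$ the product of the weights of the edges of $\rho$, $\gamma_R(d)=\sum_{\rho\in\chi_R(d)}W_R(\rho)$,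 $N_{G_R}(z)=\sum_{d\in D_R}\gamma_R(d)z^{\bar D_R-d}$ and $G_R(z)=N_{G_R}(z)/z^{\bar D_R}$. The observability network is defined analogously (acyclic graph $(V_O,E_O)$ with paths from the sensor node to $v_c$, weights $W_O$, delay set $D_O$, $\bar D_O=\max D_O$, coefficients $\gamma_O$, $N_{G_O}(z)=\sum_{d\in D_O}\gamma_O(d)z^{\bar D_O-d}$, $G_O(z)=N_{G_O}(z)/z^{\bar D_O}$). Controller: $C(z)=M(z)z^{\bar D_R}z^{\bar D_O}C'(z)$, $C'(z)=N_{C'}(z)/D_C(z)$ with $N_{C'}(z)=d_sz^s+\dots+d_0$, $D_C(z)=(z-1)(z^m+c_{m-1}z^{m-1}+\dots+c_0)$, where $m+1=s+\deg M+\bar D_R+\bar D_O$; decision vectors $\mathbf c=(c_{m-1},\dots,c_0)$, $\mathbf d=(d_s,\dots,d_0)$, $\mathbf w_R=(W_R(e))_{e\in E_R}$, $\mathbf w_O=(W_O(e))_{e\in E_O}$. Closed loop: with reference $r(k)=A$ for $k\ge0$ (Z-transform $R(z)=Az/(z-1)$), the plant output has Z-transform $Y(z)=\dfrac{C(z)G_R(z)P(z)}{1+C(z)G_R(z)P(z)G_O(z)}R(z)$, and the error is $e(k)=y(k)-r(k)$. *)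

(* Defs.v *)
From HB Require Import structures.
From mathcomp Require Import all_boot all_order all_algebra.
From mathcomp Require Import fraction.
From mathcomp Require Import mpoly.
From mathcomp Require Import reals.
Set Implicit Arguments. Unset Strict Implicit. Unset Printing Implicit Defensive.
Import Order.TTheory GRing.Theory Num.Theory.
Local Open Scope ring_scope.

Section Graph.
Variables (V : eqType) (E : finType) (src tgt : E -> V).

Definition is_walk (v0 v1 : V) (s : seq E) : bool :=
  if s is e :: s' then
    [&& src e == v0, path (fun e f => tgt e == src f) e s' & tgt (last e s') == v1]
  else v0 == v1.

Definition acyclic : Prop := forall v (s : seq E), s != [::] -> ~~ is_walk v v s.

Definition all_seqs (k : nat) : seq (seq E) :=
  flatten [seq [seq tval t | t : i.-tuple E] | i <- iota 0 k.+1].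

(* in an acyclic graph every directed path has at most #|E| edges, so this is
   the (duplicate-free) list of all directed paths from v0 to v1 *)
Definition paths (v0 v1 : V) : seq (seq E) :=
  [seq p <- all_seqs #|E| | is_walk v0 v1 p].

Variables (v0 v1 : V) (delay : seq E -> nat).

Definition delays : seq nat := undup [seq delay p | p <- paths v0 v1].
Definition Dbar : nat := \max_(d <- delays) d.

Variable R : comNzRingType.
Definition pathW (w : E -> R) (p : seq E) : R := \prod_(e <- p) w e.
Definition gamma (w : E -> R) (d : nat) : R :=
  \sum_(p <- paths v0 v1 | delay p == d) pathW w p.
Definition NG (w : E -> R) : {poly R} :=
  \sum_(d <- delays) gamma w d *: 'X^(Dbar - d).
End Graph.

Notation "x %:F" := (@FracField.tofrac _ x).
Section ZTrans.
Variable R : idomainType.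
Definition hz (h : nat -> R) (k : int) : R :=
  if k is Posz k' then h k' else 0.
Definition coefZ (N : {poly R}) (p : int) : R :=
  if p is Posz p' then N`_p' else 0.
(* [h] is the causal sequence whose Z-transform  sum_k h k z^-k  equals the
   rational function F, i.e. for some representation F = N/D (D <> 0) the
   formal Laurent series identity  D(z) * sum_k h(k) z^-k = N(z)  holds
   (coefficient of z^p, for every integer p). *)
Definition zinv (F : {fraction {poly R}}) (h : nat -> R) : Prop :=
  exists N D : {poly R}, D != 0 /\ F = N%:F / D%:F /\
    forall p : int, \sum_(i < size D) D`_i * hz h (i%:Z - p) = coefZ N p.
End ZTrans.

Definition seq_cvg_to (R : realFieldType) (u : nat -> R) (l : R) : Prop :=
  forall eps : R, 0 < eps -> exists N : nat, forall k, (N <= k)%N -> `|u k - l| < eps.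
Definition series_to (R : realFieldType) (u : nat -> R) (l : R) : Prop :=
  seq_cvg_to (fun K => \sum_(k < K) u k) l.

Definition degp (R : nzRingType) (p : {poly R}) : nat := (size p).-1.

Definition NCp (R : comNzRingType) (s : nat) (d : 'I_s.+1 -> R) : {poly R} :=
  \sum_(i < s.+1) d i *: 'X^i.
Definition DC (R : comNzRingType) (m : nat) (c : 'I_m -> R) : {poly R} :=
  ('X - 1) * ('X^m + \sum_(i < m) c i *: 'X^i).

Definition dw_vec (R : Type) (s : nat) (E : finType) (d : 'I_s.+1 -> R) (w : E -> R)
  : 'I_(s.+1 + #|E|) -> R :=
  fun i => match split i with inl j => d j | inr j => w (enum_val j) end.

Definition closed_loop_Y (R : idomainType) (A : R)
  (NP M DPp NCp' DCp NGR NGO : {poly R}) (DR DO : nat) : {fraction {poly R}} :=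
  let P  := NP%:F / (M * DPp)%:F in
  let C  := (M * 'X^DR * 'X^DO)%:F * (NCp'%:F / DCp%:F) in
  let GR := NGR%:F / ('X^DR)%:F in
  let GO := NGO%:F / ('X^DO)%:F in
  let Rz := (A *: 'X)%:F / ('X - 1)%:F in
  (C * GR * P) / (1 + C * GR * P * GO) * Rz.

(* Main.v *)
Require Import Defs.
From HB Require Import structures.
From mathcomp Require Import all_boot all_order all_algebra.
From mathcomp Require Import fraction mpoly reals.
From mathcomp Require Import zify ring.
Import Order.TTheory GRing.Theory Num.Theory.
Local Open Scope ring_scope.
Set Implicit Arguments. Unset Strict Implicit. Unset Printing Implicit Defensive.

Section Conv.
Variable R : idomainType.
Implicit Types (D E : {poly R}) (g : int -> R).

Definition conv D g (p : int) : R := \sum_(i < size D) D`_i * g (p - i%:Z).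
Definition ser (N : {poly R}) (q : int) : R := Defs.coefZ N q.

Lemma conv_widen D g p n : (size D <= n)%N ->
  conv D g p = \sum_(i < n) D`_i * g (p - i%:Z).
Proof.
move=> hn; rewrite /conv (big_ord_widen n (fun i => D`_i * g (p - i%:Z)) hn).
rewrite big_mkcond; apply: eq_bigr => i _; case: ifP => // /negbT.
by rewrite -leqNgt => h; rewrite nth_default // mul0r.
Qed.

Lemma conv_ext D g1 g2 p : (forall q, g1 q = g2 q) -> conv D g1 p = conv D g2 p.
Proof. by move=> h; apply: eq_bigr => i _; rewrite h. Qed.

Lemma convD D E g p : conv (D + E) g p = conv D g p + conv E g p.
Proof.
set n := maxn (size D) (size E).
rewrite (@conv_widen (D + E) g p n) ?size_polyD //.
rewrite (@conv_widen D g p n) ?leq_maxl // (@conv_widen E g p n) ?leq_maxr //.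
by rewrite -big_split; apply: eq_bigr => i _; rewrite coefD mulrDl.
Qed.

Lemma convC c g p : conv c%:P g p = c * g p.
Proof.
rewrite (@conv_widen _ g p 1) ?size_polyC ?leq_b1 //.
by rewrite big_ord1 coefC /= subr0.
Qed.

Lemma convX D g p : conv ('X * D) g p = conv D g (p - 1).
Proof.
rewrite (@conv_widen _ g p (size D).+1); last first.
  by rewrite mulrC; have [->|nz] := eqVneq D 0; [rewrite mul0r size_poly0|rewrite size_mulX].
rewrite (mulrC 'X D) big_ord_recl coefMX eqxx mul0r add0r /conv.
apply: eq_bigr => i _; rewrite coefMX /= /bump /=.
congr (_ * g _); lia.
Qed.

Lemma convCM c D g p : conv (c%:P * D) g p = c * conv D g p.
Proof.
rewrite (@conv_widen _ g p (size D)); last by rewrite mul_polyC size_scale_leq.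
rewrite /conv mulr_sumr; apply: eq_bigr => i _.
by rewrite mul_polyC poly.coefZ mulrA.
Qed.

Lemma convM D E g p : conv (D * E) g p = conv D (conv E g) p.
Proof.
elim/poly_ind: D p => [|D c IH] p.
  by rewrite mul0r /conv size_poly0 !big_ord0.
rewrite mulrDl !convD convCM convC.
have -> : D * 'X * E = 'X * (D * E) by ring.
by rewrite convX IH (mulrC D) convX.
Qed.

Lemma convMC D E g p : conv D (conv E g) p = conv E (conv D g) p.
Proof. by rewrite -!convM mulrC. Qed.

Lemma conv_ser D N p : conv D (ser N) p = ser (D * N) p.
Proof.
elim/poly_ind: D p => [|D c IH] p.
  by rewrite mul0r /conv size_poly0 big_ord0 /ser /Defs.coefZ; case: p => // k; rewrite coef0.
rewrite convD convC mulrDl.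
have -> : D * 'X * N = 'X * (D * N) by ring.
rewrite (mulrC D) convX IH /ser /Defs.coefZ.
case: p => [[|k]|k] /=.
- by rewrite coefD coefCM coefXM.
- by rewrite coefD coefCM coefXM /= subn1.
- by rewrite mulr0 addr0.
Qed.

Lemma convB D g1 g2 p : conv D (fun q => g1 q - g2 q) p = conv D g1 p - conv D g2 p.
Proof. by rewrite /conv -sumrB; apply: eq_bigr => i _; rewrite mulrBr. Qed.


Lemma conv_bound D g P : (forall q, P < q -> g q = 0) ->
  forall p, P + (size D)%:Z < p -> conv D g p = 0.
Proof.
move=> hP p hp; apply: big1 => i _; rewrite hP ?mulr0 //.
have := ltn_ord i; lia.
Qed.

Lemma conv_cancel D g P : D != 0 -> (forall q, P < q -> g q = 0) ->
  (forall p, conv D g p = 0) -> forall q, g q = 0.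
Proof.
move=> nz hP h0.
have H : forall k : nat, g (P - k%:Z) = 0.
  elim/ltn_ind => k IH.
  set dd := (size D).-1.
  have hs : size D = dd.+1 by rewrite prednK // size_poly_gt0.
  have := h0 (P - k%:Z + dd%:Z); rewrite /conv hs big_ord_recr /=.
  rewrite big1 ?add0r; last first.
    move=> i _; have hi := ltn_ord i.
    case: (ltnP k (dd - i)) => hk.
      by rewrite hP ?mulr0 //; lia.
    rewrite (_ : P - k%:Z + dd%:Z - i%:Z = P - (k - (dd - i))%N%:Z); last by lia.
    by rewrite IH ?mulr0 //; lia.
  rewrite addrK => /eqP; rewrite mulf_eq0 => /orP [|/eqP //].
  have : lead_coef D != 0 by rewrite lead_coef_eq0.
  by rewrite lead_coefE hs /= => /negPf ->.
move=> q; case: (ltrP P q) => [/hP//|hq].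
have -> : q = P - (`|P - q|%N)%:Z by lia.
exact: H.
Qed.

End Conv.

Lemma frac_eq (K : fieldType) (A Mv DPv NPv NCv DCv NGRv NGOv X Xr Xo Z : K) :
 Mv != 0 -> DPv != 0 -> DCv != 0 -> Xr != 0 -> Xo != 0 -> X - 1 != 0 -> Z != 0 ->
 DCv * DPv + NCv * NGRv * NPv * NGOv = Z ->
 ((Mv * Xr * Xo) * (NCv / DCv)) * (NGRv / Xr) * (NPv / (Mv * DPv)) /
 (1 + ((Mv * Xr * Xo) * (NCv / DCv)) * (NGRv / Xr) * (NPv / (Mv * DPv)) * (NGOv / Xo))
  * ((A * X) / (X - 1)) = (A * (X * Xo * (NCv * NGRv * NPv))) / (Z * (X - 1)).
Proof.
move=> hM hD hC hr ho hx hz hZ.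
rewrite -hZ in hz *.
field; by rewrite hx hz ho hD hM hr hC.
Qed.


Section Extra.
Variable R : idomainType.

Lemma convXn l E (g : int -> R) p : conv ('X^l * E) g p = conv E g (p - l%:Z).
Proof.
elim: l p => [|l IH] p; first by rewrite expr0 mul1r subr0.
rewrite exprS -mulrA convX IH; congr (conv _ _ _); lia.
Qed.

Lemma conv_Xsub1 (g : int -> R) p : conv ('X - 1) g p = g (p - 1) - g p.
Proof.
have -> : ('X - 1 : {poly R}) = 'X * 1 + (-1)%:P by rewrite mulr1 polyCN polyC1.
by rewrite convD convC convX -polyC1 convC !mul1r mulN1r.
Qed.

Lemma coefZ_neg (N : {poly R}) q : q < 0 -> Defs.coefZ N q = 0.
Proof. by case: q. Qed.
End Extra.

Theorem proposition1
  (R : realType) (n r m s : nat) (A : R)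
  (* plant P(z) = N_P(z) / (M(z) D_P'(z)) *)
  (NP M DPp : {poly R})
  (hNP : (size NP <= n)%N)
  (hM : M \is monic)
  (hDPp : DPp \is monic) (hDPsz : size DPp = r.+1)
  (hn : (r + degp M)%N = n)
  (* controllability network *)
  (VR ER : finType) (srcR tgtR : ER -> VR) (vc vu : VR) (delR : seq ER -> nat)
  (acycR : acyclic srcR tgtR)
  (* observability network *)
  (VO EO : finType) (srcO tgtO : EO -> VO) (vy vc' : VO) (delO : seq EO -> nat)
  (acycO : acyclic srcO tgtO)
  (* dimension of the controller *)
  (hm : (m + 1 = s + degp M + Dbar srcR tgtR vc vu delR + Dbar srcO tgtO vy vc' delO)%N) :
  exists Q : {mpoly R[s.+1 + #|ER|]},
    forall (c : 'I_m -> R) (d : 'I_s.+1 -> R) (wR : ER -> R) (wO : EO -> R)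
           (y : nat -> R),
      let NGR := NG srcR tgtR vc vu delR wR in
      let NGO := NG srcO tgtO vy vc' delO wO in
      (* deadbeat identity, l = m + r + 1 *)
      DC c * DPp + NCp d * NGR * NP * NGO = 'X^(m + r + 1) ->
      (* y is the plant output: its Z-transform is Y(z) *)
      zinv (closed_loop_Y A NP M DPp (NCp d) (DC c) NGR NGO
              (Dbar srcR tgtR vc vu delR) (Dbar srcO tgtO vy vc' delO)) y ->
      (* zero steady-state error: e(k) = y(k) - A -> 0 *)
      seq_cvg_to (fun k => y k - A) 0 ->
      (* ||e||^2 = sum_{k>=0} e(k)^2 = Q(d, w_R) *)
      series_to (fun k => (y k - A) ^+ 2) (Q.@[dw_vec d wR]).
Proof.
set DR := Dbar srcR tgtR vc vu delR.
set DO := Dbar srcO tgtO vy vc' delO.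
set l := (m + r + 1)%N.
pose dm : 'I_s.+1 -> {mpoly R[s.+1 + #|ER|]} := fun i => 'X_(lshift #|ER| i).
pose wm : ER -> {mpoly R[s.+1 + #|ER|]} := fun e => 'X_(rshift s.+1 (enum_rank e)).
pose N0m : {poly {mpoly R[s.+1 + #|ER|]}} := A%:MP *: ('X^(DO.+1) *
   (NCp dm * NG srcR tgtR vc vu delR wm * map_poly (fun x => x%:MP) NP)).
pose Ym k := \sum_(j < k.+1) N0m`_(l.+1 - j).
exists (\sum_(k < l.+1) (Ym k - A%:MP) ^+ 2).
move=> c d wR wO y NGR NGO hdb hzinv hcv.
pose v := dw_vec d wR.
pose N0 : {poly R} := A *: ('X^(DO.+1) * (NCp d * NGR * NP)).
pose D0 : {poly R} := 'X^l * ('X - 1).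
have hmap : map_poly (meval v) N0m = N0.
  rewrite /N0m /N0 map_polyZ /= mevalC !rmorphM /= map_polyXn.
  congr (_ *: (_ * (_ * _ * _))).
  - rewrite /NCp rmorph_sum /=; apply: eq_bigr => i _.
    rewrite map_polyZ map_polyXn /= mevalXU /v /dw_vec.
    by rewrite (unsplitK (inl i : 'I_s.+1 + 'I_#|ER|)).
  - rewrite /NGR /NG rmorph_sum /=; apply: eq_bigr => dd _.
    rewrite map_polyZ map_polyXn; congr (_ *: _).
    rewrite /gamma rmorph_sum /=; apply: eq_bigr => p _.
    rewrite /pathW rmorph_prod /=; apply: eq_bigr => e _.
    rewrite /= mevalXU /v /dw_vec.
    by rewrite (unsplitK (inr (enum_rank e) : 'I_s.+1 + 'I_#|ER|)) /= enum_rankK.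
  - by rewrite -map_poly_comp map_poly_id // => x _ /=; rewrite mevalC.
have hX1 : ('X - 1 : {poly R}) != 0 by rewrite -polyC1 monic_neq0 // monicXsubC.
have hXn : forall k, ('X^k : {poly R}) != 0 by move=> k; rewrite monic_neq0 // monicXn.
have hDC : DC c != 0.
  rewrite /DC mulf_neq0 //; apply/eqP => h0.
  have := congr1 (fun p : {poly R} => p`_m) h0.
  rewrite coef0 coefD coefXn eqxx coef_sum big1 ?addr0; first by move/eqP; rewrite oner_eq0.
  move=> i _; rewrite poly.coefZ coefXn.
  by rewrite (_ : (m == i) = false) ?mulr0 //; apply/negbTE; rewrite neq_ltn ltn_ord orbT.
have hF : closed_loop_Y A NP M DPp (NCp d) (DC c) NGR NGO DR DO = N0%:F / D0%:F.
  move: (DC c) hDC hdb => DCc hDC hdb.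
  rewrite /closed_loop_Y /N0 /D0 -!mul_polyC !tofracM tofracB tofrac1 (exprS _ DO) !tofracM.
  apply: frac_eq; rewrite ?tofrac_eq0 ?hXn ?hDC ?monic_neq0 //.
  - by rewrite -tofrac1 -tofracB tofrac_eq0.
  - by rewrite -!tofracM -tofracD hdb.
case: hzinv => [N' [D' [nzD' [hFe hser]]]].
have cross : N0 * D' = N' * D0.
  move: hFe; rewrite hF => /eqP; rewrite eqr_div ?tofrac_eq0 ?mulf_neq0 ?hXn //.
  by rewrite -!tofracM tofrac_eq => /eqP.
pose H := fun q : int => hz y (- q).
have hD' : forall p, conv D' H p = ser N' p.
  by move=> p; rewrite /ser -hser /conv; apply: eq_bigr => i _; rewrite /H opprB.
have key : forall p, conv D0 H p = ser N0 p.
  move=> p; apply/eqP; rewrite -subr_eq0; apply/eqP; move: p.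
  apply: (@conv_cancel _ D' (fun p => conv D0 H p - ser N0 p) ((size D0 + size N0)%N%:Z) nzD').
  - move=> q hq; rewrite (@conv_bound _ D0 H 0); first last.
    + rewrite add0r; apply: le_lt_trans hq; rewrite lez_nat leq_addr //.
    + by move=> q'; case: q' => [[|k]|k].
    rewrite /ser; case: q hq => k hq /=; last by rewrite subrr.
    rewrite nth_default ?subrr //; move: hq; rewrite ltz_nat => hq.
    by apply: leq_trans (ltnW hq); exact: leq_addl.
  - move=> p; rewrite convB convMC (@conv_ext _ D0 (conv D' H) (ser N') p hD').
    by rewrite !conv_ser (mulrC D0) -cross mulrC subrr.
have hrec : forall p, H (p - l%:Z - 1) - H (p - l%:Z) = ser N0 p.
  by move=> p; rewrite -key /D0 convXn conv_Xsub1.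
have h0 : y 0 = N0`_l.+1.
  have := hrec (l.+1)%:Z.
  rewrite (_ : l.+1%:Z - l%:Z - 1 = 0); last by lia.
  rewrite (_ : l.+1%:Z - l%:Z = 1); last by lia.
  by rewrite /H oppr0 /= subr0.
have hS : forall k, y k.+1 - y k = Defs.coefZ N0 (l%:Z - k%:Z).
  move=> k; have := hrec (l%:Z - k%:Z).
  rewrite (_ : l%:Z - k%:Z - l%:Z - 1 = - (k.+1)%:Z); last by lia.
  rewrite (_ : l%:Z - k%:Z - l%:Z = - k%:Z); last by lia.
  by rewrite /H !opprK.
have hcoef : forall i, N0`_i = meval v (N0m`_i).
  by move=> i; rewrite -hmap coef_map.
have hyk : forall k, (k <= l.+1)%N -> y k = meval v (Ym k).
  elim=> [|k IH] hk; first by rewrite /Ym big_ord1 subn0 -hcoef h0.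
  rewrite /Ym big_ord_recr /= rmorphD /= -/(Ym k) -IH; last exact: ltnW.
  rewrite subSS -hcoef.
  have := hS k; rewrite (_ : l%:Z - k%:Z = (l - k)%N%:Z); last by lia.
  by move=> /= <-; rewrite addrC subrK.
have htail : forall t, y (l.+1 + t)%N = y l.+1.
  elim=> [|t IH]; first by rewrite addn0.
  rewrite addnS; apply/eqP; rewrite -subr_eq0 -IH; apply/eqP.
  by rewrite hS coefZ_neg //; lia.
have hyA : y l.+1 = A.
  apply/eqP; rewrite -subr_eq0; apply/negPn/negP => hne.
  have hpos : 0 < `|y l.+1 - A| by rewrite normr_gt0.
  have [N hN] := hcv _ hpos.
  by have := hN (l.+1 + N)%N (leq_addl _ _); rewrite htail subr0 ltxx.
move=> eps heps; exists l.+1 => K hK.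
have hQ : (\sum_(k < l.+1) (Ym k - A%:MP) ^+ 2).@[dw_vec d wR]
          = \sum_(k < l.+1) (y k - A) ^+ 2.
  rewrite rmorph_sum /=; apply: eq_bigr => k _.
  by rewrite rmorphXn rmorphB /= mevalC hyk // ltnW.
rewrite hQ (_ : \sum_(k < K) (y k - A) ^+ 2 = \sum_(k < l.+1) (y k - A) ^+ 2).
  by rewrite subrr normr0.
rewrite -(subnKC hK); elim: (K - l.+1)%N => [|t IH]; first by rewrite addn0.
by rewrite addnS big_ord_recr /= IH htail hyA subrr expr2 mulr0 addr0.
Qed.
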